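(* Let $J$ be an interval of ${}^\bullet\mathbb{R}$. Then both $J$ and its interior $\mathrm{int}(J)$ are connected in the Fermat topology.
   Context: Fermat reals: let $\mathbb{R}_o[t]$ be the set of maps $x:\mathbb{R}_{\ge0}\to\mathbb{R}$, $t\mapsto x_t$, of the form $x_t=r+\sum_{i=1}^k\alpha_i t^{a_i}+o(t)$ as $t\to0^+$, with $k\in\mathbb{N}$, $r,\alpha_i\in\mathbb{R}$, $a_i\in\mathbb{R}_{\ge0}$. Write $x\sim y$ iff $x_t=y_t+o(t)$ as $t\to0^+$. The ring of Fermat reals is ${}^\bullet\mathbb{R}:=\mathbb{R}_o[t]/\sim$ with pointwise operations; $\mathbb{R}\subseteq{}^\bullet\mathbb{R}$ via constants. The standard part of $x=[x_t]$ is ${}^\circ x:=x_0$. ${}^\bullet\mathbb{R}$ is totally ordered by: $x\le y$ iff for representatives there is $z\in\mathbb{R}_o[t]$ with $z\sim0$ and $x_t\le y_t+z_t$ for all sufficiently small $t\ge0$. Let $\overline{{}^\bullet\mathbb{R}}:={}^\bullet\mathbb{R}\cup\{-\infty,+\infty\}$ with ${}^\circ(\pm\infty):=\pm\infty$. An interval of ${}^\bullet\mathbb{R}$ is a set $[a,b]$, $(a,b)$, $[a,b)$ or $(a,b]$ of points $x\in{}^\bullet\mathbb{R}$ satisfying the corresponding inequalities, where $a\le b$ are in $\overline{{}^\bullet\mathbb{R}}$. The Fermat topology on ${}^\bullet\mathbb{R}$ has as open sets the sets ${}^\bullet V:=\{x\in{}^\bullet\mathbb{R}:{}^\circ x\in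 V\}$ for $V\subseteq\mathbb{R}$ open; subsets carry the subspace topology, and $\mathrm{int}$ denotes interior in the Fermat topology (for an interval with endpoints $a,b$ it equals $\{x\in{}^\bullet\mathbb{R}:{}^\circ a<{}^\circ x<{}^\circ b\}$). *)

(* Defs.v *)
From HB Require Import structures.
From mathcomp Require Import all_boot all_order all_algebra.
From mathcomp Require Import all_classical all_reals.
From mathcomp Require Import all_analysis.
Import numFieldTopology.Exports.
Set Implicit Arguments. Unset Strict Implicit. Unset Printing Implicit Defensive.
Import Order.TTheory GRing.Theory Num.Theory.
Local Open Scope classical_set_scope.
Local Open Scope ring_scope.

Section Fermat.
Variable R : realType.

(* w_t = o(t) as t -> 0+, for t ranging in R_{>=0} (so in particular w_0 = 0). *)
Definition littleo_t (w : R -> R) : Prop :=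
  forall e : R, 0 < e -> exists2 d : R, 0 < d &
    forall t : R, 0 <= t -> t < d -> `|w t| <= e * t.

(* R_o[t]: maps x with x_t = r + sum_i alpha_i t^(a_i) + o(t), a_i >= 0.
   Only the values on t >= 0 are relevant; the pairs (alpha_i, a_i) are the
   elements of the list s. *)
Definition Rot (x : R -> R) : Prop :=
  exists (r : R) (s : seq (R * R)),
    (forall p, p \in s -> 0 <= p.2) /\
    littleo_t (fun t => x t - (r + \sum_(p <- s) p.1 * powR t p.2)).

Definition fsim (x y : R -> R) : Prop := littleo_t (fun t => x t - y t).

Definition fclass (x : R -> R) : set (R -> R) := [set y | Rot y /\ fsim x y].

Definition FR : Type := {X : set (R -> R) | exists2 x, Rot x & X = fclass x}.

HB.instance Definition _ := gen_eqMixin FR.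
HB.instance Definition _ := gen_choiceMixin FR.

Definition FRrep (X : FR) : R -> R := s2val (cid2 (svalP X)).

Definition st (X : FR) : R := FRrep X 0.

Definition FRle (X Y : FR) : Prop :=
  exists (x y z : R -> R), sval X x /\ sval Y y /\ Rot z /\ fsim z (fun=> 0) /\
    exists2 d : R, 0 < d & forall t : R, 0 <= t -> t < d -> x t <= y t + z t.

Inductive eFR := NInf | Fin of FR | PInf.

Definition eFRle (a b : eFR) : Prop :=
  match a, b with
  | NInf, _ => True
  | _, PInf => True
  | Fin x, Fin y => FRle x y
  | _, _ => False
  end.

Definition eFRlt (a b : eFR) : Prop := eFRle a b /\ a <> b.

Inductive itv_kind := CC | OO | CO | OC.

Definition FRitv (k : itv_kind) (a b : eFR) : set FR :=
  [set x | match k with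
           | CC => eFRle a (Fin x) /\ eFRle (Fin x) b
           | OO => eFRlt a (Fin x) /\ eFRlt (Fin x) b
           | CO => eFRle a (Fin x) /\ eFRlt (Fin x) b
           | OC => eFRlt a (Fin x) /\ eFRle (Fin x) b
           end].

Definition is_FRinterval (J : set FR) : Prop :=
  exists (k : itv_kind) (a b : eFR), eFRle a b /\ J = FRitv k a b.

End Fermat.

(* the Fermat topology on FR: the initial topology of the standard part map,
   i.e. open sets are exactly {x | st x \in V} with V open in R *)
Notation FRtop R := (@initial_topology (FR R) R (@st R)).

(* Main.v *)
Require Import Defs.
From HB Require Import structures.
From mathcomp Require Import all_boot all_order all_algebra.
From mathcomp Require Import all_classical all_reals.
From mathcomp Require Import all_analysis.
From mathcomp Require Import lra.
Import numFieldTopology.Exports.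
Import Order.TTheory GRing.Theory Num.Theory.
Local Open Scope classical_set_scope.
Local Open Scope ring_scope.
Definition near0 (R : realType) (g : R -> R) : Prop :=
  forall e : R, 0 < e -> exists2 d : R, 0 < d &
    forall t : R, 0 <= t -> t < d -> `|g t - g 0| < e.
Arguments near0 {R} g.

Lemma near0_cst (R : realType) (c : R) : near0 (fun=> c).
Proof. by move=> e e0; exists 1 => // t _ _; rewrite subrr normr0. Qed.

Lemma near0D (R : realType) (f g h : R -> R) :
  (forall t, h t = f t + g t) -> near0 f -> near0 g -> near0 h.
Proof.
move=> hE nf ng e e0.
have e2 : 0 < e / 2 by rewrite divr_gt0.
have [d1 d10 H1] := nf _ e2; have [d2 d20 H2] := ng _ e2.
exists (Num.min d1 d2); first by rewrite lt_min d10 d20.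
move=> t t0; rewrite lt_min => /andP[td1 td2].
rewrite !hE (_ : _ - _ = (f t - f 0) + (g t - g 0)); last by rewrite opprD addrACA.
apply: (le_lt_trans (ler_normD _ _)).
by rewrite (splitr e) ltrD // ?H1 ?H2.
Qed.
Arguments near0D {R} [f g h].

Lemma near0Z (R : realType) (c : R) (f : R -> R) :
  near0 f -> near0 (fun t => c * f t).
Proof.
move=> nf e e0.
have c1 : 0 < `|c| + 1 by rewrite ltr_wpDl.
have [d d0 H] := nf (e / (`|c| + 1)) (divr_gt0 e0 c1).
exists d => // t t0 td.
rewrite -mulrBr normrM.
apply: (le_lt_trans (ler_wpM2l (normr_ge0 c) (ltW (H t t0 td)))).
rewrite mulrA ltr_pdivrMr // mulrC ltr_pM2l //.
by rewrite ltrDl.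
Qed.

Lemma near0_sum (R : realType) (s : seq (R * R)) (F : R * R -> R -> R) :
  (forall p, p \in s -> near0 (F p)) ->
  near0 (fun t => \sum_(p <- s) F p t).
Proof.
elim: s => [|p s IH] Hs.
  apply: (near0D (f := fun=> 0) (g := fun=> 0)) => [t||];
    [by rewrite big_nil addr0 | exact: near0_cst | exact: near0_cst].
apply: (near0D (f := F p) (g := fun t => \sum_(q <- s) F q t)).
- by move=> t; rewrite big_cons.
- by apply: Hs; rewrite mem_head.
- by apply: IH => q qs; apply: Hs; rewrite in_cons qs orbT.
Qed.

Lemma near0_powR (R : realType) (a : R) : 0 <= a -> near0 (fun t => powR t a).
Proof.
rewrite le_eqVlt => /orP[/eqP<-|a0].
  apply: (near0D (f := fun=> 1) (g := fun=> 0)) => [t||]; last exact: near0_cst.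
  - by rewrite powRr0 addr0.
  exact: near0_cst.
move=> e e0.
exists (powR e a^-1); first exact: powR_gt0.
move=> t t0 td.
rewrite powR0 ?gt_eqF // subr0 ger0_norm ?powR_ge0 //.
have -> : e = powR (powR e a^-1) a.
  by rewrite -powRrM mulVf ?gt_eqF // powRr1 // ltW.
apply: gt0_ltr_powR => //; rewrite nnegrE //.
exact: powR_ge0.
Qed.

Lemma littleo_at0 (R : realType) (w : R -> R) : littleo_t w -> w 0 = 0.
Proof.
move=> /(_ 1 ltr01) [d d0 /(_ 0 (lexx _) d0)].
by rewrite mulr0 normr_le0 => /eqP.
Qed.

Lemma near0_littleo (R : realType) (w : R -> R) : littleo_t w -> near0 w.
Proof.
move=> lw e e0; have w0 := @littleo_at0 R w lw.
have [d d0 H] := lw 1 ltr01.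
exists (Num.min d e); first by rewrite lt_min d0 e0.
move=> t t0; rewrite lt_min => /andP[td te].
rewrite w0 subr0; apply: (le_lt_trans (H t t0 td)).
by rewrite mul1r.
Qed.

Lemma near0_Rot (R : realType) (x : R -> R) : Rot x -> near0 x.
Proof.
move=> [r [s [Hs lw]]].
apply: (near0D (f := fun t => x t - (r + \sum_(p <- s) p.1 * powR t p.2))
               (g := fun t => r + \sum_(p <- s) p.1 * powR t p.2)).
- by move=> t; rewrite subrK.
- exact: near0_littleo.
apply: (near0D (f := fun=> r) (g := fun t => \sum_(p <- s) p.1 * powR t p.2)) => //.
  exact: near0_cst.
apply: near0_sum => p ps; apply: near0Z; exact: (@near0_powR R _ (Hs p ps)).
Qed.
Set Implicit Arguments. Unset Strict Implicit.
Lemma fsim_refl (R : realType) (x : R -> R) : fsim x x.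
Proof.
move=> e e0; exists 1 => // t t0 _.
by rewrite subrr normr0 mulr_ge0 // ltW.
Qed.

Lemma Rot_cst (R : realType) (r : R) : Rot (fun=> r).
Proof.
exists r, [::]; split => // e e0; exists 1 => // t t0 _.
by rewrite big_nil addr0 subrr normr0 mulr_ge0 // ltW.
Qed.

Lemma rep_spec (R : realType) (X : FR R) :
  Rot (FRrep X) /\ sval X = fclass (FRrep X).
Proof. by rewrite /FRrep; case: (cid2 _) => x /= Rx E. Qed.

Lemma rep_mem (R : realType) (X : FR R) : sval X (FRrep X).
Proof.
have [Rx ->] := rep_spec X; split => //; exact: fsim_refl.
Qed.

Lemma st_mem (R : realType) (X : FR R) y : sval X y -> st X = y 0.
Proof.
have [Rx ->] := rep_spec X; move=> [_ /(@littleo_at0 R) /eqP].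
by rewrite subr_eq0 => /eqP.
Qed.

Lemma cst_ex (R : realType) (r : R) :
  exists2 x, Rot x & fclass (fun=> r) = fclass x.
Proof. by exists (fun=> r); [apply: Rot_cst|]. Qed.

Definition cstFR (R : realType) (r : R) : FR R :=
  exist (fun X => exists2 x, Rot x & X = fclass x) (fclass (fun=> r)) (@cst_ex R r).

Lemma st_cst (R : realType) (r : R) : st (cstFR r) = r.
Proof. by rewrite (@st_mem R (cstFR r) (fun=> r)) //; split; [apply: Rot_cst|apply: fsim_refl]. Qed.

Lemma FRle_st (R : realType) (X Y : FR R) : FRle X Y -> st X <= st Y.
Proof.
move=> [x [y [z [Xx [Yy [_ [z0 [d d0 H]]]]]]]].
have := H 0 (lexx 0) d0.
rewrite (st_mem Xx) (st_mem Yy).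
have := @littleo_at0 R _ z0; rewrite /= subr0 => ->.
by rewrite addr0.
Qed.

Lemma st_FRle (R : realType) (X Y : FR R) : st X < st Y -> FRle X Y.
Proof.
move=> lt; exists (FRrep X), (FRrep Y), (fun=> 0).
split; first exact: rep_mem.
split; first exact: rep_mem.
split; first exact: Rot_cst.
split; first exact: fsim_refl.
have [RX _] := rep_spec X; have [RY _] := rep_spec Y.
have e0 : 0 < (st Y - st X) / 2 by rewrite divr_gt0 // subr_gt0.
have [dx dx0 Hx] := @near0_Rot R _ RX _ e0.
have [dy dy0 Hy] := @near0_Rot R _ RY _ e0.
exists (Num.min dx dy); first by rewrite lt_min dx0 dy0.
move=> t t0; rewrite lt_min => /andP[tx ty].
move: (Hx t t0 tx) (Hy t t0 ty); rewrite /st in lt e0 *.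
rewrite !ltr_norml => /andP[h1 h2] /andP[h3 h4].
rewrite addr0; lra.
Qed.
Definition convP (R : realType) (A : set (FRtop R)) : Prop :=
  forall x y z : FR R, A x -> A y -> st x < st z -> st z < st y -> A z.

Lemma lowerP (R : realType) (a : eFR R) (x z : FR R) :
  eFRle a (Fin x) -> st x < st z -> eFRlt a (Fin z).
Proof.
case: a => [|A|] //= HA lt; split => //.
  exact: st_FRle (le_lt_trans (FRle_st HA) lt).
move=> [eAz]; subst A.
by move: (FRle_st HA); rewrite leNgt lt.
Qed.

Lemma upperP (R : realType) (b : eFR R) (x z : FR R) :
  eFRle (Fin x) b -> st z < st x -> eFRlt (Fin z) b.
Proof.
case: b => [|B|] //= HB lt; split => //.
  exact: st_FRle (lt_le_trans lt (FRle_st HB)).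
move=> [ezB]; subst B.
by move: (FRle_st HB); rewrite leNgt lt.
Qed.

Lemma interval_convP (R : realType) k (a b : eFR R) : convP (FRitv k a b).
Proof.
move=> x y z; rewrite /FRitv /=; case: k.
- move=> [ax _] [_ yb] xz zy; split; [exact: (lowerP ax xz).1 | exact: (upperP yb zy).1].
- move=> [[ax _] _] [_ [yb _]] xz zy; split; [exact: (lowerP ax xz) | exact: (upperP yb zy)].
- move=> [ax _] [_ [yb _]] xz zy; split; [exact: (lowerP ax xz).1 | exact: (upperP yb zy)].
- move=> [[ax _] _] [_ yb] xz zy; split; [exact: (lowerP ax xz) | exact: (upperP yb zy).1].
Qed.

Lemma convP_interior (R : realType) (J : set (FRtop R)) :
  convP J -> convP (interior J).
Proof.
move=> PJ x y z Ix Iy xz zy.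
have Jx := interior_subset Ix; have Jy := interior_subset Iy.
pose V := [set r : R | st x < r] `&` [set r : R | r < st y].
have oV : open V by apply: openI; [exact: open_gt | exact: open_lt].
have oU : open ((@st R : FRtop R -> R) @^-1` V).
  exact: ((continuousP _).1 (@initial_continuous _ _ (@st R)) V oV).
rewrite /interior /=.
apply: (@filterS _ _ _ ((@st R : FRtop R -> R) @^-1` V)).
  by move=> w [xw wy]; exact: PJ Jx Jy xw wy.
by apply: open_nbhs_nbhs; split.
Qed.

Lemma connected_of_convP (R : realType) (A : set (FRtop R)) :
  convP A -> connected A.
Proof.
move=> PA B [b Bb] [C oC BC] [D cD BD].
case: oC => V oV VC.
case: (closed_openC cD) => W oW WD.
have DE : D = (@st R : FRtop R -> R) @^-1` (~` W).
  by rewrite -preimage_setC WD setCK.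
pose S := (@st R : FRtop R -> R) @` A.
have iS : is_interval S.
  apply/is_intervalPlt => r1 r2 [a1 Aa1 <-] [a2 Aa2 <-] r /andP[r1r rr2].
  exists (cstFR r); last exact: st_cst.
  by apply: (PA a1 a2); rewrite ?st_cst.
have cS : connected S by apply/connected_intervalP.
have SV : S `&` V = S.
  apply: cS.
  - have : (A `&` C) b by rewrite -BC.
    by move=> [Ab Cb]; exists (st b); split; [exists b | rewrite -VC in Cb].
  - by exists V.
  - exists (~` W); first exact: open_closedC.
    apply/seteqP; split => r [[a Aa <-]] h; split; try by exists a.
    + have : (A `&` C) a by split => //; rewrite -VC.
      rewrite -BC BD DE => -[_]; exact.
    + have : (A `&` D) a by split => //; rewrite DE.
      by rewrite -BD BC => -[_]; rewrite -VC.
apply/seteqP; split; first by rewrite BC => a [].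
move=> a Aa; rewrite BC; split => //.
have : S (st a) by exists a.
by rewrite -SV => -[_ Va]; rewrite -VC.
Qed.
Unset Implicit Arguments.

Theorem lemma6 (R : realType) (J : set (FRtop R)) :
  is_FRinterval J -> connected J /\ connected (interior J).
Proof.
move=> [k [a [b [_ ->]]]].
have P := @interval_convP R k a b.
split; first exact: connected_of_convP.
by apply: connected_of_convP; apply: convP_interior.
Qed.
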